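(* Let $a\in\{0,\dots,m\}$, $b\in\{0,\dots,n\}$. For each $k=1,\dots,p$ write the dominant of $\boldsymbol A_k\sqcup\boldsymbol B_k$ as $0=c^{(k)}_{a+b}<c^{(k)}_{a+b-1}+1<\dots<c^{(k)}_{a+b-j}+j<\dots<c^{(k)}_1+a+b-1$ (this defines integers $c^{(k)}_1,\dots,c^{(k)}_{a+b}$), let $\tilde z_k=z_k+\lambda^{(k)}_{m+1}h$ and $\mathscr T_i(x)=\prod_{k=1}^p\prod_{j=1}^{c^{(k)}_i}(x-\tilde z_k+jh)$. Then \[\pi_{a,b}\prod_{j=1}^a\mathscr T_j[j]=\prod_{i=1}^a\big(T_{m-a+i}[b+i]\,T_{m+1}[i-1]\big).\]
   Context: Fix $h\in\mathbb{C}^\times$; $f[i](x)=f(x-ih)$. Polynomial $\mathfrak{gl}_{m|n}$ weights: $\lambda\in\mathbb{Z}^{m+n}_{\ge0}$, $\lambda_1\ge\dots\ge\lambda_m$, $\lambda_{m+1}\ge\dots\ge\lambda_{m+n}$, $\lambda_{m+k}=0$ for $k>\lambda_m$. Let $\boldsymbol\lambda=(\lambda^{(1)},\dots,\lambda^{(p)})$ be polynomial weights and $\boldsymbol z=(z_1,\dots,z_p)$ $h$-generic ($z_i-z_j\notin h\mathbb{Z}$, $i\ne j$). $T_i(x)=\prod_{k=1}^p\prod_{j=1}^{\lambda^{(k)}_i}(x-z_k+s_ijh)$ with $s_i=1$ for $i\le m$ and $s_i=-1$ for $i>m$. $\pi_{a,b}(x)=\prod_{k=1}^p\prod_{i=1}^a\prod_{j=1}^{\min\{b,\lambda^{(k)}_{m-i+1}\}}(x-z_k+(i+j-a-b-1)h)$.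 For each $k$: $\boldsymbol A_k=\{\lambda^{(k)}_{m-r+1}+\lambda^{(k)}_{m+1}+r-1\}_{r=1}^a$ and $\boldsymbol B_k=\{\lambda^{(k)}_{m+1}-\lambda^{(k)}_{m+r}+r-1\}_{r=1}^b$. Partitions with $r$ parts are weakly increasing sequences of nonnegative integers (multisets are sorted into partitions, $\sqcup$ is multiset union); $\boldsymbol b$ dominates $\boldsymbol a$ if $b_i\ge a_i$ for all $i$; the dominant of $\boldsymbol a$ is the smallest (with respect to dominance) partition with $r$ distinct parts dominating $\boldsymbol a$. *)

(* Defs.v *)
From HB Require Import structures.
From mathcomp Require Import all_boot all_order all_algebra.
From mathcomp Require Import complex.
From mathcomp Require Import reals.
Set Implicit Arguments. Unset Strict Implicit. Unset Printing Implicit Defensive.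
Import Order.TTheory GRing.Theory Num.Theory.
Local Open Scope ring_scope.

(* 1-indexed component lambda_i of a weight given as a seq of length m+n
   (components out of range read as 0). *)
Definition wt (l : seq nat) (i : nat) : nat := nth 0%N l i.-1.

Definition is_poly_weight (m n : nat) (l : seq nat) : Prop :=
  [/\ size l = (m + n)%N,
      (forall i, (1 <= i)%N -> (i < m)%N -> (wt l (i.+1) <= wt l i)%N),
      (forall i, (m + 1 <= i)%N -> (i < m + n)%N -> (wt l (i.+1) <= wt l i)%N)
    & (forall k, (0 < m)%N -> (1 <= k <= n)%N -> (wt l m < k)%N -> wt l (m + k) = 0%N)].

(* f[i](x) = f(x - i h) *)
Definition shiftp (C : fieldType) (h : C) (f : {poly C}) (i : nat) : {poly C} :=
  f \Po ('X - (i%:R * h)%:P).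

Definition sgn_s (m i : nat) : int := if (i <= m)%N then 1%Z else (-1)%Z.

Definition Tpoly (C : fieldType) (h : C) (m p : nat) (lam : 'I_p -> seq nat)
    (z : 'I_p -> C) (i : nat) : {poly C} :=
  \prod_(k < p) \prod_(1 <= j < (wt (lam k) i).+1)
      ('X - (z k)%:P + ((sgn_s m i * j%:Z)%:~R * h)%:P).

Definition pipoly (C : fieldType) (h : C) (m p : nat) (lam : 'I_p -> seq nat)
    (z : 'I_p -> C) (a b : nat) : {poly C} :=
  \prod_(k < p) \prod_(1 <= i < a.+1)
    \prod_(1 <= j < (minn b (wt (lam k) (m - i + 1))).+1)
      ('X - (z k)%:P + (((i + j)%:Z - (a + b + 1)%:Z)%:~R * h)%:P).

Definition Aset (m : nat) (l : seq nat) (a : nat) : seq nat :=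
  [seq (wt l (m - r + 1) + wt l (m + 1) + r - 1)%N | r <- iota 1 a].
Definition Bset (m : nat) (l : seq nat) (b : nat) : seq nat :=
  [seq (wt l (m + 1) - wt l (m + r) + r - 1)%N | r <- iota 1 b].

(* partitions: weakly increasing sequences of naturals *)
Definition dominates (bb aa : seq nat) : Prop :=
  size bb = size aa /\ forall i, (i < size aa)%N -> (nth 0 aa i <= nth 0 bb i)%N.

Definition distinct_partition (d : seq nat) : Prop := sorted ltn d.

Definition is_dominant (aa d : seq nat) : Prop :=
  [/\ distinct_partition d, dominates d aa &
      forall d', distinct_partition d' -> dominates d' aa -> dominates d' d].

Definition h_generic (C : fieldType) (h : C) (p : nat) (z : 'I_p -> C) : Prop :=
  forall i j : 'I_p, i != j -> forall t : int, z i - z j != t%:~R * h.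

Definition scrT (C : fieldType) (h : C) (m p : nat) (lam : 'I_p -> seq nat)
    (z : 'I_p -> C) (c : 'I_p -> nat -> nat) (i : nat) : {poly C} :=
  \prod_(k < p) \prod_(1 <= j < (c k i).+1)
      ('X - (z k + (wt (lam k) (m + 1))%:R * h)%:P + (j%:R * h)%:P).

(* Main.v *)
Require Import Defs.
From HB Require Import structures.
From mathcomp Require Import all_boot all_order all_algebra.
From mathcomp Require Import complex.
From mathcomp Require Import reals.
From mathcomp Require Import zify ring.
Import Order.TTheory GRing.Theory Num.Theory.

Lemma nth_le_count (s : seq nat) x p :
  sorted leq s -> p < count (fun y => y <= x) s -> nth 0 s p <= x.
Proof.
elim: s p => [|y s IH] p //= Hs Hc.
case: p Hc => [|p] Hc /=.
  case: (leqP y x) => // Hyx; exfalso.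
  have H0 : count (fun y0 => y0 <= x) s = 0.
    rewrite (@eq_in_count _ _ pred0) ?count_pred0 // => w Hw /=.
    have := (order_path_min leq_trans Hs); move/allP/(_ w Hw) => Hyw. apply/negbTE. lia.
  move: Hc; rewrite H0 /= (leqNgt y x) Hyx. done.
apply: IH; first exact: path_sorted Hs.
move: Hc; case: (y <= x); rewrite /=; lia.
Qed.

Lemma nth_ge_count (s : seq nat) x p :
  sorted leq s -> p < size s -> size s - p <= count (fun y => x <= y) s ->
  x <= nth 0 s p.
Proof.
elim: s p => [|y s IH] p //= Hs Hp Hc.
case: (leqP x y) => Hxy.
  case: p Hp Hc => [|p] Hp Hc //=.
  have := (order_path_min leq_trans Hs); move/allP => H.
  apply: leq_trans Hxy _; apply: H; apply: mem_nth; move: Hp => /=; lia.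
case: p Hp Hc => [|p] Hp Hc /=.
  have := count_size (fun y => x <= y) s. move: Hc; rewrite (leqNgt x y) Hxy /=. lia.
apply: IH; first exact: path_sorted Hs. lia.
move: Hc; rewrite (leqNgt x y) Hxy /=; lia.
Qed.

Lemma count_iota_ge (P : pred nat) m n i k :
  m <= i -> i + k <= m + n -> (forall j, i <= j < i + k -> P j) ->
  k <= count P (iota m n).
Proof.
move=> H1 H2 H3.
have -> : n = (i - m) + (k + (m + n - i - k)) by lia.
rewrite iotaD iotaD !count_cat.
have -> : m + (i - m) = i by lia.
have : count P (iota i k) = k.
  rewrite -[X in _ = X](size_iota i k) -count_predT.
  apply: eq_in_count => j; rewrite mem_iota => Hj; rewrite H3 //.
lia.
Qed.

Lemma sorted_ltn_gap (D : seq nat) i j :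
  sorted ltn D -> i <= j -> j < size D -> nth 0 D i + (j - i) <= nth 0 D j.
Proof.
move=> /(sortedP 0) HD Hij; elim: j Hij => [|j IH] Hij Hj.
  have -> : i = 0 by lia. lia.
case: (ltngtP i j.+1) Hij => // Hi _; last by (subst; lia).
have := HD j Hj; have := IH (ltnSE Hi) (ltnW Hj). lia.
Qed.

Lemma dom_c (m n a b : nat) (l : seq nat) (c : nat -> nat) :
  is_poly_weight m n l -> a <= m -> b <= n ->
  is_dominant (sort leq (Aset m l a ++ Bset m l b))
              [seq c (a + b - j) + j | j <- iota 0 (a + b)] ->
  forall r, 1 <= r <= a ->
  c (a + 1 - r) = maxn (wt l (m - r + 1)) b + wt l (m + 1) - b.
Proof.
move=> [Hsz Hm Hn Hz] Ham Hbn [HDd [HDsz HDs] Hmin] r Hr.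
set s := sort leq (Aset m l a ++ Bset m l b) in HDs Hmin HDsz *. set D := map _ (iota 0 (a + b)) in HDd HDs Hmin HDsz *.
set nu := wt l (m + 1).
have mono : forall r1 r2, 1 <= r1 <= r2 -> r2 <= a -> wt l (m - r1 + 1) <= wt l (m - r2 + 1).
  move=> r1 r2 H12; elim: r2 H12 => [|r2 IH] H12 H2a; first lia.
  case: (leqP r1 r2) => Hle; last by (have -> : r1 = r2.+1 by lia).
  have step : wt l (m - r2 + 1) <= wt l (m - r2.+1 + 1).
    have := Hm (m - r2) ltac:(lia) ltac:(lia).
    have -> : (m - r2).+1 = m - r2 + 1 by lia.
    by have -> : m - r2.+1 + 1 = m - r2 by lia.
  have := IH ltac:(lia) ltac:(lia). lia.
pose G r := maxn (wt l (m - r + 1)) b + nu + r - 1.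
have szs : size s = a + b by rewrite size_sort size_cat !size_map !size_iota.
have sorts : sorted leq s by exact: (sort_sorted leq_total).
have cnt : forall P, count P s = count P (Aset m l a) + count P (Bset m l b).
  by move=> P; rewrite /s (permP (permEl (perm_sort leq _))) count_cat.
have nthD : forall p, p < a + b -> nth 0 D p = c (a + b - p) + p.
  by move=> p Hp; rewrite /D (nth_map 0) ?size_iota // nth_iota.
have key : nth 0 D (b + r - 1) = G r.
  apply/eqP; rewrite eqn_leq; apply/andP; split.
  - pose d' := mkseq (fun p => if p < b then nu + p else G (p - b + 1)) (a + b).
    have Hd' : distinct_partition d'.
      apply/(sortedP 0) => i; rewrite size_mkseq => Hi.
      rewrite !nth_mkseq; try lia.
      case: (ltnP i.+1 b) => H1.
        by rewrite ifT; [lia | lia].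
      case: (ltnP i b) => H2.
        rewrite /G; have -> : i.+1 - b + 1 = 1 by lia. lia.
      rewrite /G.
      have := mono (i - b + 1) (i.+1 - b + 1) ltac:(lia) ltac:(lia). lia.
    have Hd's : dominates d' s.
      split; first by rewrite size_mkseq szs.
      move=> i; rewrite szs => Hi; rewrite nth_mkseq //.
      case: (ltnP i b) => Hib.
        apply: nth_le_count => //; rewrite cnt.
        have : i.+1 <= count (fun y => y <= nu + i) (Bset m l b).
          rewrite /Bset count_map; apply: (@count_iota_ge _ _ _ (1)); try lia.
          move=> j Hj /=; rewrite /nu; lia.
        lia.
      apply: nth_le_count => //; rewrite cnt.
      have : i - b + 1 <= count (fun y => y <= G (i - b + 1)) (Aset m l a).
        rewrite /Aset count_map; apply: (@count_iota_ge _ _ _ (1)); try lia.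
        move=> j Hj /=; rewrite /G /nu.
        have := mono j (i - b + 1) ltac:(lia) ltac:(lia). lia.
      have : b <= count (fun y => y <= G (i - b + 1)) (Bset m l b).
        rewrite /Bset count_map; apply: (@count_iota_ge _ _ _ (1)); try lia.
        move=> j Hj /=; rewrite /G /nu; lia.
      lia.
    have [_ HdD] := Hmin d' Hd' Hd's.
    have := HdD (b + r - 1) ltac:(rewrite size_map size_iota; lia).
    rewrite /d' nth_mkseq; last lia.
    rewrite ifF; last lia.
    by have -> : b + r - 1 - b + 1 = r by lia.
  - case: (leqP b (wt l (m - r + 1))) => Hab.
      have Hs := HDs (b + r - 1) ltac:(rewrite szs; lia).
      apply: leq_trans Hs.
      apply: nth_ge_count => //; first lia.
      rewrite cnt szs.
      have : a - r + 1 <= count (fun y => G r <= y) (Aset m l a).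
        rewrite /Aset count_map; apply: (@count_iota_ge _ _ _ (r)); try lia.
        move=> j Hj /=; rewrite /G /nu.
        have := mono r j ltac:(lia) ltac:(lia). lia.
      lia.
    set q := wt l (m - 1 + 1).
    have Hq : q <= wt l (m - r + 1) by apply: mono; lia.
    have HDsz' : size D = a + b by rewrite size_map size_iota.
    have Hgap := @sorted_ltn_gap D q (b + r - 1) HDd ltac:(lia) ltac:(lia).
    apply: leq_trans Hgap.
    have Hs := HDs q ltac:(rewrite szs; lia).
    have : nu + q <= nth 0 s q.
      apply: nth_ge_count => //; first lia.
      rewrite cnt szs.
      have : a <= count (fun y => nu + q <= y) (Aset m l a).
        rewrite /Aset count_map; apply: (@count_iota_ge _ _ _ (1)); try lia.
        move=> j Hj /=; rewrite /nu.
        have := mono 1 j ltac:(lia) ltac:(lia). rewrite /q. lia.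
      have : b - q <= count (fun y => nu + q <= y) (Bset m l b).
        rewrite /Bset count_map; apply: (@count_iota_ge _ _ _ (q.+1)); try lia.
        move=> j Hj /=; rewrite /nu.
        have Hm1 : m - 1 + 1 = m by lia.
        have := Hz j ltac:(lia) ltac:(lia) ltac:(rewrite /q Hm1 in Hj; lia).
        lia.
      lia.
    rewrite /G; lia.
move: key; rewrite nthD; last lia.
have -> : a + b - (b + r - 1) = a + 1 - r by lia.
rewrite /G; lia.
Qed.

Local Open Scope ring_scope.
Set Implicit Arguments. Unset Strict Implicit.
Section P.
Variable C : fieldType.
Variables (z h : C).

Definition gf (t : int) : {poly C} := 'X - z%:P + (t%:~R * h)%:P.
Definition J (u : int) (L : nat) : {poly C} := \prod_(1 <= j < L.+1) gf (u + j%:Z).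

Lemma natz_R (n : nat) : (n%:Z)%:~R = n%:R :> C.
Proof. by rewrite pmulrn. Qed.

Lemma lin_eq (A B A' B' : C) : B - A = B' - A' ->
  'X - A%:P + B%:P = 'X - A'%:P + B'%:P :> {poly C}.
Proof.
move=> H.
have E : forall A B : C, 'X - A%:P + B%:P = 'X + (B - A)%:P :> {poly C}.
  move=> A0 B0; rewrite polyCB; ring.
by rewrite !E H.
Qed.

Lemma shift_gf t (i : nat) : shiftp h (gf t) i = gf (t - i%:Z).
Proof.
rewrite /shiftp /gf comp_polyD comp_polyB comp_polyX !comp_polyC.
rewrite intrB natz_R mulrBl polyCB; ring.
Qed.

Lemma shiftp_prod (I : Type) (r : seq I) (P : pred I) (F : I -> {poly C}) k :
  shiftp h (\prod_(i <- r | P i) F i) k = \prod_(i <- r | P i) shiftp h (F i) k.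
Proof.
rewrite /shiftp; apply: (big_morph (fun q => q \Po _)).
  by move=> x y; rewrite comp_polyM.
by rewrite -polyC1 comp_polyC.
Qed.

Lemma J_split u L1 L2 : J u (L1 + L2)%N = J u L1 * J (u + L1%:Z) L2.
Proof.
rewrite /J (big_cat_nat (n := L1.+1)) //=; last by rewrite ltnS leq_addr.
congr (_ * _).
rewrite -{1}[L1.+1]add1n big_addn.
have -> : ((L1 + L2).+1 - L1 = L2.+1)%N by lia.
apply: eq_bigr => j _; congr gf; rewrite PoszD; ring.
Qed.


Lemma gf_eq t t' : t = t' -> gf t = gf t'.
Proof. by move->. Qed.

Lemma core v w (b al nu : nat) : v + b%:Z = w + nu%:Z ->
  J v (minn b al) * J w (maxn al b + nu - b)%N = J v al * J w nu.
Proof.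
move=> H; case: (leqP al b) => Hab.
  by rewrite (_ : (b + nu - b = nu)%N); last lia.
rewrite (_ : (al + nu - b = nu + (al - b))%N); last lia.
have -> : al = (b + (al - b))%N by lia.
rewrite !J_split H.
have -> : (b + (al - b) - b = al - b)%N by lia.
by rewrite -mulrA (mulrC (J w nu)).
Qed.

Lemma Fpi (r M a b : nat) :
  \prod_(1 <= j < M.+1) ('X - z%:P + ((((r + j)%N%:Z - (a + b + 1)%N%:Z)%:~R * h)%:P))
  = J (r%:Z - (a + b + 1)%N%:Z) M.
Proof. apply: eq_bigr => j _; apply: gf_eq; rewrite PoszD; lia. Qed.

Lemma Fscr (nu Cn e : nat) :
  shiftp h (\prod_(1 <= l < Cn.+1) ('X - (z + nu%:R * h)%:P + (l%:R * h)%:P)) e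
  = J (- nu%:Z - e%:Z) Cn.
Proof.
rewrite shiftp_prod; apply: eq_bigr => l _.
have -> : 'X - (z + nu%:R * h)%:P + (l%:R * h)%:P = gf (l%:Z - nu%:Z).
  rewrite /gf; apply: lin_eq; rewrite intrB !natz_R; ring.
rewrite shift_gf; apply: gf_eq; lia.
Qed.

Lemma FT1 (s : int) (A e : nat) : s = 1 ->
  shiftp h (\prod_(1 <= j < A.+1) ('X - z%:P + ((s * j%:Z)%:~R * h)%:P)) e
  = J (- e%:Z) A.
Proof.
move=> ->; rewrite shiftp_prod; apply: eq_bigr => j _.
rewrite (_ : 'X - z%:P + _ = gf (1 * j%:Z)) // shift_gf; apply: gf_eq; lia.
Qed.

Lemma FT2 (s : int) (A e : nat) : s = -1 ->
  shiftp h (\prod_(1 <= j < A.+1) ('X - z%:P + ((s * j%:Z)%:~R * h)%:P)) e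
  = J (- (A.+1)%:Z - e%:Z) A.
Proof.
move=> ->; rewrite shiftp_prod big_nat_rev; apply: eq_big_nat => j /andP [Hj1 Hj2].
rewrite (_ : 'X - z%:P + _ = gf (-1 * (1 + A.+1 - j.+1)%N%:Z)) // shift_gf; apply: gf_eq.
have -> : (1 + A.+1 - j.+1 = A.+1 - j)%N by lia.
lia.
Qed.

End P.

Lemma main_gen (C : fieldType) (m p : nat) (h : C) (lam : 'I_p -> seq nat)
   (z : 'I_p -> C) (a b : nat) (c : 'I_p -> nat -> nat) :
  (a <= m)%N ->
  (forall k : 'I_p, forall r, (1 <= r <= a)%N ->
     c k (a + 1 - r)%N = (maxn (wt (lam k) (m - r + 1)) b + wt (lam k) (m + 1) - b)%N) ->
  pipoly h m lam z a b *
    \prod_(1 <= j < a.+1) shiftp h (scrT h m lam z c j) j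
  = \prod_(1 <= i < a.+1)
      (shiftp h (Tpoly h m lam z (m - a + i)) (b + i) *
       shiftp h (Tpoly h m lam z (m + 1)) (i - 1)).
Proof.
move=> Ham Hc.
have E1 : pipoly h m lam z a b = \prod_(1 <= r < a.+1) \prod_(k < p)
    J (z k) h (r%:Z - (a + b + 1)%N%:Z) (minn b (wt (lam k) (m - r + 1))).
  rewrite /pipoly exchange_big; apply: eq_bigr => r _; apply: eq_bigr => k _.
  exact: Fpi.
have E2 : \prod_(1 <= j < a.+1) shiftp h (scrT h m lam z c j) j =
    \prod_(1 <= r < a.+1) \prod_(k < p)
    J (z k) h (- (wt (lam k) (m + 1))%:Z - (a + 1 - r)%N%:Z) (c k (a + 1 - r)%N).
  rewrite big_nat_rev; apply: eq_big_nat => r /andP [Hr1 Hr2].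
  rewrite (_ : (1 + a.+1 - r.+1 = a + 1 - r)%N); last lia.
  rewrite /scrT shiftp_prod; apply: eq_bigr => k _; exact: Fscr.
have E3 : \prod_(1 <= i < a.+1)
      (shiftp h (Tpoly h m lam z (m - a + i)) (b + i) *
       shiftp h (Tpoly h m lam z (m + 1)) (i - 1)) =
    \prod_(1 <= r < a.+1)
      (\prod_(k < p) J (z k) h (- (b + (a + 1 - r))%N%:Z) (wt (lam k) (m - r + 1)) *
       \prod_(k < p) J (z k) h (- (wt (lam k) (m + 1)).+1%:Z - (a - r)%N%:Z)
                      (wt (lam k) (m + 1))).
  rewrite big_nat_rev; apply: eq_big_nat => r /andP [Hr1 Hr2].
  rewrite (_ : (1 + a.+1 - r.+1 = a + 1 - r)%N); last lia.
  rewrite /Tpoly !shiftp_prod; congr (_ * _); apply: eq_bigr => k _.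
    rewrite (_ : (m - a + (a + 1 - r) = m - r + 1)%N); last lia.
    by apply: FT1; rewrite /sgn_s ifT //; lia.
  rewrite (_ : (a + 1 - r - 1 = a - r)%N); last lia.
  by apply: FT2; rewrite /sgn_s ifF //; lia.
rewrite E1 E2 E3 -big_split; apply: eq_big_nat => r /andP [Hr1 Hr2].
rewrite -!big_split; apply: eq_bigr => k _ /=.
rewrite Hc; last lia.
rewrite (_ : r%:Z - (a + b + 1)%N%:Z = - (b + (a + 1 - r))%N%:Z); last lia.
rewrite (_ : - (wt (lam k) (m + 1))%:Z - (a + 1 - r)%N%:Z =
             - (wt (lam k) (m + 1)).+1%:Z - (a - r)%N%:Z); last lia.
apply: core; lia.
Qed.

Theorem proposition6p5 (R : realType) (m n p : nat) (h : R[i])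
    (lam : 'I_p -> seq nat) (z : 'I_p -> R[i]) (a b : nat)
    (c : 'I_p -> nat -> nat) :
  h != 0 ->
  (forall k, is_poly_weight m n (lam k)) ->
  h_generic h z ->
  (a <= m)%N -> (b <= n)%N ->
  (forall k : 'I_p,
     is_dominant (sort leq (Aset m (lam k) a ++ Bset m (lam k) b))
                 [seq (c k (a + b - j)%N + j)%N | j <- iota 0 (a + b)]) ->
  pipoly h m lam z a b *
    \prod_(1 <= j < a.+1) shiftp h (scrT h m lam z c j) j
  = \prod_(1 <= i < a.+1)
      (shiftp h (Tpoly h m lam z (m - a + i)) (b + i) *
       shiftp h (Tpoly h m lam z (m + 1)) (i - 1)).
Proof.
move=> _ Hw _ Ham Hbn Hd.
apply: main_gen => // k r Hr.
exact: (@dom_c m n a b (lam k) (c k) (Hw k) Ham Hbn (Hd k) r Hr).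
Qed.
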